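(* Let $(H,G)$ be a finite Gelfand pair with notation as in the context, where index $i=1$ corresponds to the diagonal orbit $O_1$ and index $j=1$ to the trivial representation $T_1$. Then the matrix $C_{ij}=(\mathrm{X}_i,\Psi_j)$ satisfies $$\sum_i C_{ij}=\delta_{1j}|X|,\qquad \sum_j C_{ij}=\delta_{i1}|X| .$$
   Context: Let $G$ be a finite group, $H\le G$ a subgroup, $X=G/H$ with the left $G$-action, $x_0=H\in X$. $\mathbb{C}[X\times X]^G$ is the space of complex functions on $X\times X$ invariant under the diagonal $G$-action, with convolution $(f\times g)(x,z)=\sum_{y\in X}f(x,y)g(y,z)$ and Hermitian inner product $(a,b)=\sum_{x,y\in X}a(x,y)\overline{b(x,y)}$. $(H,G)$ is a Gelfand pair if $(\mathbb{C}[X\times X]^G,\times)$ is commutative; equivalently the permutation representation $\mathbb{C}[X]$, $(gf)(x)=f(g^{-1}x)$, decomposes as $\mathbb{C}[X]=\bigoplus_{j}T_j$ with $T_j$ pairwise non-isomorphic irreducible $G$-subrepresentations; $T_1$ denotes the constants. Each $T_j$ carries a $G$-invariant Hermitian inner product $\langle\cdot,\cdot\rangle$ (linear in the first variable) and contains an $H$-invariant vector $\theta_j$ with $\langle\theta_j,\theta_j\rangle=1$. The spherical function of $T_j$ is $\psi_j(g)=\frac{\dim T_j}{|X|}\langle T_j(g)\theta_j,\theta_j\rangle$; $\Psi_j(gH,g'H):=\psi_j(g^{-1}g')$. The $G$-orbits on $X\times X$ are $O_1,\dots,O_k$, with $O_1$ the diagonal, $\mathrm{X}_i$ is the characteristic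 function of $O_i$, and $o_i=\{x\in X:(x_0,x)\in O_i\}$. *)

(* Defs.v *)
From HB Require Import structures.
From mathcomp Require Import all_boot all_order all_algebra all_fingroup all_field.
From mathcomp Require Import mxrepresentation.
Set Implicit Arguments. Unset Strict Implicit. Unset Printing Implicit Defensive.
Import Order.TTheory GRing.Theory Num.Theory.
Local Open Scope ring_scope.

Section GelfandDefs.
Variables (gT : finGroupType) (G H : {group gT}).

Definition Xc : {set {set gT}} := lcosets H G.
Definition nX : nat := #|Xc|.
(* enumeration of X, used to index C[X] = 'rV[algC]_nX *)
Definition cosX (i : 'I_nX) : {set gT} := enum_val i.

(* Right-action matrix: (f *m permX g) (x) = f (g x), i.e. f *m permX g = g^-1 . f
   where (g . f)(x) = f(g^-1 x) is the permutation representation. *)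
Definition permX (g : gT) : 'M[algC]_nX :=
  \matrix_(i, j) ((cosX i == (g *: cosX j)%g)%:R).

Lemma cosX_in (i : 'I_nX) : cosX i \in Xc.
Proof. exact: enum_valP. Qed.

Lemma permX_repr : mx_repr G permX.
Proof.
split.
  apply/matrixP=> i j; rewrite !mxE lcoset1.
  by rewrite (inj_eq enum_val_inj).
move=> x y Gx Gy; apply/matrixP=> i j; rewrite !mxE.
have Xyj : (y *: cosX j)%g \in Xc.
  case/lcosetsP: (cosX_in j) => z Gz ->.
  by apply/lcosetsP; exists (y * z)%g; rewrite ?groupM // lcosetM.
pose k := enum_rank_in Xyj (y *: cosX j)%g.
have ck : cosX k = (y *: cosX j)%g by rewrite /cosX enum_rankK_in.
rewrite (bigD1 k) //= !mxE ck eqxx mulr1 big1 ?addr0; first by rewrite lcosetM.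
move=> l nlk; rewrite !mxE; case: eqP => [el|]; last by rewrite mul0r.
by rewrite -ck (inj_eq enum_val_inj) (negbTE nlk) mulr0.
Qed.

Definition rX : mx_representation algC G nX := MxRepresentation permX_repr.

Definition formQ (Q : 'M[algC]_nX) (u v : 'rV[algC]_nX) : algC :=
  (u *m Q *m (map_mx (fun z : algC => z^*) v)^T) 0 0.

Definition inv_inner_on (U Q : 'M[algC]_nX) : Prop :=
  [/\ forall u v, (u <= U)%MS -> (v <= U)%MS -> formQ Q v u = (formQ Q u v)^*,
      forall u, (u <= U)%MS -> u != 0 -> 0 < formQ Q u u
    & forall g u v, g \in G -> (u <= U)%MS -> (v <= U)%MS ->
        formQ Q (u *m rX g) (v *m rX g) = formQ Q u v].

(* Spherical function psi(g) = dim T / |X| * <T(g) theta, theta>,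
   with T(g) theta = theta *m rX g^-1. *)
Definition spherical (T Q : 'M[algC]_nX) (theta : 'rV[algC]_nX) (g : gT) : algC :=
  (\rank T)%:R / nX%:R * formQ Q (theta *m rX g^-1%g) theta.

Definition Psi (T Q : 'M[algC]_nX) (theta : 'rV[algC]_nX) (x y : {set gT}) : algC :=
  spherical T Q theta ((repr x)^-1 * repr y)%g.

Definition orbitsXX : {set {set ({set gT} * {set gT})}} :=
  [set [set ((g *: p.1)%g, (g *: p.2)%g) | g in G] | p in setX Xc Xc].

Definition diagXX : {set ({set gT} * {set gT})} := [set (x, x) | x in Xc].

(* (f, g) = sum_{x,y} f(x,y) conj(g(x,y)) with f the characteristic function of O. *)
Definition Cmat (O : {set ({set gT} * {set gT})}) (F : {set gT} -> {set gT} -> algC) : algC :=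
  \sum_(x in Xc) \sum_(y in Xc) ((x, y) \in O)%:R * (F x y)^*.

End GelfandDefs.

Arguments formQ {gT} G H Q u v.
Arguments inv_inner_on {gT} G H U Q.
Arguments spherical {gT} G H T Q theta g.
Arguments Psi {gT} G H T Q theta x y.

(* Main.v *)
Require Import Defs.
From HB Require Import structures.
From mathcomp Require Import all_boot all_order all_algebra all_fingroup all_field.
From mathcomp Require Import mxrepresentation.
Set Implicit Arguments. Unset Strict Implicit. Unset Printing Implicit Defensive.
Import Order.TTheory GRing.Theory Num.Theory.
Local Open Scope ring_scope.

Section Basics.
Variables (gT : finGroupType) (G H : {group gT}).
Hypothesis sHG : H \subset G.
Local Notation n := (nX G H).
Local Notation Xc := (Xc G H).
Local Notation rX := (rX G H).

Lemma HXc : (H : {set gT}) \in Xc.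
Proof. by apply/lcosetsP; exists 1%g; rewrite ?group1 ?lcoset1. Qed.

Definition ix (x : {set gT}) : 'I_n := enum_rank_in HXc x.
Definition i0 : 'I_n := ix H.

Lemma ixK x : x \in Xc -> cosX (ix x) = x.
Proof. by move=> xX; rewrite /Defs.cosX /ix enum_rankK_in. Qed.

Lemma cosXK i : ix (cosX i) = i.
Proof. by rewrite /Defs.cosX /ix enum_valK_in. Qed.

Lemma cosX_inj : injective (@cosX gT G H).
Proof. exact: enum_val_inj. Qed.

Lemma actXc g x : g \in G -> x \in Xc -> (g *: x)%g \in Xc.
Proof.
move=> Gg /lcosetsP[z Gz ->]; apply/lcosetsP; exists (g * z)%g; rewrite ?groupM //.
by rewrite lcosetM.
Qed.

Definition actX (g : gT) (i : 'I_n) : 'I_n := ix (g *: cosX i)%g.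

Lemma cosX_act g i : g \in G -> cosX (actX g i) = (g *: cosX i)%g.
Proof. by move=> Gg; rewrite ixK // actXc // cosX_in. Qed.

Lemma rXE g i j : rX g i j = (cosX i == g *: cosX j)%g%:R.
Proof. by rewrite /= mxE. Qed.

Lemma mulmx_rX m (A : 'M[algC]_(m, n)) g i j : g \in G ->
  (A *m rX g) i j = A i (actX g j).
Proof.
move=> Gg; rewrite mxE (bigD1 (actX g j)) //= rXE cosX_act // eqxx mulr1.
rewrite big1 ?addr0 // => k nk; rewrite rXE.
case: eqP => [e|]; last by rewrite mulr0.
by case/eqP: nk; apply: cosX_inj; rewrite cosX_act.
Qed.

Lemma rX_mulmx m (A : 'M[algC]_(n, m)) g i j : g \in G ->
  (rX g *m A) i j = A (actX g^-1 i) j.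
Proof.
move=> Gg; rewrite mxE (bigD1 (actX g^-1 i)) //= rXE cosX_act ?groupV //.
rewrite lcosetKV eqxx mul1r.
rewrite big1 ?addr0 // => k nk; rewrite rXE.
case: eqP => [e|]; last by rewrite mul0r.
by case/eqP: nk; apply: cosX_inj; rewrite cosX_act ?groupV // e lcosetK.
Qed.

Lemma actX_comp g h i : g \in G -> h \in G -> actX g (actX h i) = actX (g * h) i.
Proof.
by move=> Gg Gh; apply: cosX_inj; rewrite !cosX_act ?groupM // lcosetM.
Qed.

Lemma act1X i : actX 1 i = i.
Proof. by apply: cosX_inj; rewrite cosX_act // lcoset1. Qed.

Lemma actXK g i : g \in G -> actX g^-1 (actX g i) = i.
Proof. by move=> Gg; rewrite actX_comp ?groupV // mulVg act1X. Qed.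

Lemma actX_trans i : exists2 a, a \in G & actX a i0 = i.
Proof.
case/lcosetsP: (cosX_in i) => a Ga e; exists a => //.
by apply: cosX_inj; rewrite cosX_act // ixK ?HXc.
Qed.

End Basics.

Section Proj.
Variables (gT : finGroupType) (G H : {group gT}).
Local Notation n := (nX G H).
Local Notation rX := (rX G H).
Variables (I : finType) (T : I -> 'M[algC]_n).
Hypothesis simT : forall j, mxsimple rX (T j).
Hypothesis nisoT : forall i j, i != j -> ~ mx_iso rX (T i) (T j).
Hypothesis dirT : mxdirect (\sum_j T j).
Hypothesis fullT : (\sum_j T j == 1%:M)%MS.

Definition Pj j := locked (proj_mx (T j) (\sum_(i | i != j) T i)%MS).

Lemma dxT j : (T j :&: \sum_(i | i != j) T i = 0)%MS.
Proof. by move/mxdirect_sumsP: dirT => /(_ j isT). Qed.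

Lemma PjT i j m (W : 'M_(m, n)) : (W <= T i)%MS ->
  W *m Pj j = if i == j then W else 0.
Proof.
move=> sWi; rewrite /Pj -lock; case: eqP => [<-|/eqP ij]; first by apply: proj_mx_id => //; apply: dxT.
apply: proj_mx_0; first exact: dxT.
apply: submx_trans sWi _.
by apply: (sumsmx_sup i) => //; rewrite eq_sym.
Qed.

Lemma Pj_sub j m (W : 'M_(m, n)) : (W *m Pj j <= T j)%MS.
Proof. rewrite /Pj -lock; exact: proj_mx_sub. Qed.

Lemma extT (A B : 'M_n) : (forall i, T i *m A = T i *m B) -> A = B.
Proof.
move=> eAB; have: (1%:M <= \sum_i T i)%MS by rewrite (eqmxP fullT).
case/sub_sumsmxP=> u_ e1.
by rewrite -[A]mul1mx -[B]mul1mx e1 !mulmx_suml; apply: eq_bigr => i _;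
  rewrite -!mulmxA eAB.
Qed.

Lemma sumPj : \sum_j Pj j = 1%:M.
Proof.
apply: extT => i; rewrite mulmx1 mulmx_sumr (bigD1 i) //=.
rewrite (PjT _ (submx_refl (T i))) eqxx.
by rewrite big1 ?addr0 // => k ki; rewrite (PjT _ (submx_refl (T i))) eq_sym (negbTE ki).
Qed.

Lemma PjPj i j : Pj i *m Pj j = if i == j then Pj i else 0.
Proof. by rewrite (PjT _ (_ : Pj i <= T i)%MS) // -[Pj i]mul1mx Pj_sub. Qed.

Definition comm (f : 'M[algC]_n) := forall g, g \in G -> f *m rX g = rX g *m f.

Lemma commM f h : comm f -> comm h -> comm (f *m h).
Proof. by move=> cf ch g Gg; rewrite -mulmxA ch // !mulmxA cf. Qed.

Lemma commB f h : comm f -> comm h -> comm (f - h).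
Proof. by move=> cf ch g Gg; rewrite mulmxBl mulmxBr cf ?ch. Qed.

Lemma commS a : comm a%:M.
Proof. by move=> g Gg; rewrite mul_mx_scalar mul_scalar_mx. Qed.

Lemma comm_cent f : comm f -> centgmx rX f.
Proof. by move=> cf; apply/centgmxP => x Gx; rewrite cf. Qed.

Lemma modT i : mxmodule rX (T i).
Proof. exact: mxsimple_module. Qed.

Lemma comm_Pj j : comm (Pj j).
Proof.
move=> g Gg; apply: extT => i.
have sTg : (T i *m rX g <= T i)%MS by exact: (mxmoduleP (modT i)).
rewrite mulmxA (PjT _ (submx_refl _)) mulmxA (PjT _ sTg).
by case: eqP => _; rewrite ?mul0mx.
Qed.

Lemma comm_scalar f : comm f -> forall i, exists a, T i *m f = a *: T i.
Proof.
move=> cf i.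
have offd k : k != i -> T i *m (f *m Pj k) = 0.
  move=> ki; apply/eqP; apply: contraT => nz; exfalso.
  apply: (nisoT (i:=i) (j:=k)); first by rewrite eq_sym.
  apply: (mx_Schur_iso (simT i) (simT k)) nz; last by rewrite mulmxA Pj_sub.
  exact/centgmx_hom/comm_cent/commM/comm_Pj.
have sTf : (T i *m f <= T i)%MS.
  rewrite -[T i *m f]mulmx1 -sumPj mulmx_sumr (bigD1 i) //= big1 ?addr0.
    exact: Pj_sub.
  by move=> k ki; rewrite -mulmxA offd.
pose B := row_base (T i).
have sBf : (B *m f <= B)%MS.
  rewrite (eq_row_base (T i)); apply: submx_trans sTf.
  by apply: submxMr; rewrite eq_row_base.
case/submxP: sBf => D eBD.
have nzT : T i != 0 by case: (simT i).
have : size (char_poly D) != 1%N.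
  by rewrite size_char_poly eqSS mxrank_eq0.
case/closed_rootP => a ra.
have : eigenvalue D a by rewrite eigenvalue_root_char.
case/eigenvalueP => v vD nzv.
pose u := v *m B.
have nzu : u != 0.
  by apply: contra nzv => /eqP u0; rewrite -(mul0mx _ B) in u0;
    rewrite (row_free_inj (row_base_free _) u0).
have uT : (u <= T i)%MS by rewrite -(eq_row_base (T i)) submxMl.
have uf : u *m f = a *: u by rewrite -mulmxA eBD mulmxA vD scalemxAl.
exists a; apply/eqP; rewrite -subr_eq0 -mul_mx_scalar -mulmxBr.
apply: contraT => nz; case/negP: nzu.
have cg : comm (f - a%:M) by apply: commB => //; apply: commS.
have := mx_Schur_inj (simT i) (centgmx_hom _ (comm_cent cg)) nz.
move=> e0; rewrite -submx0 -e0 sub_capmx uT /=.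
by apply/sub_kermxP; rewrite mulmxBr uf mul_mx_scalar subrr.
Qed.

Lemma comm_decomp f : comm f -> exists a : I -> algC, f = \sum_i a i *: Pj i.
Proof.
move=> cf; have [a Ha] := fin_all_exists (comm_scalar cf).
exists a; apply: extT => k; rewrite Ha mulmx_sumr (bigD1 k) //= big1 ?addr0.
  by rewrite -scalemxAr (PjT _ (submx_refl (T k))) eqxx.
by move=> i ik; rewrite -scalemxAr (PjT _ (submx_refl (T k))) eq_sym (negbTE ik) scaler0.
Qed.

End Proj.

Definition adj m p (A : 'M[algC]_(m, p)) : 'M[algC]_(p, m) := (map_mx (fun z : algC => z^*) A)^T.

Lemma adjM m p q (A : 'M[algC]_(m, p)) (B : 'M[algC]_(p, q)) :
  adj (A *m B) = adj B *m adj A.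
Proof. by rewrite /adj map_mxM trmx_mul. Qed.

Lemma adjK m p (A : 'M[algC]_(m, p)) : adj (adj A) = A.
Proof. by apply/matrixP => i j; rewrite !mxE conjCK. Qed.

Lemma adj_delta m p i j : adj (delta_mx i j : 'M[algC]_(m, p)) = delta_mx j i.
Proof. by apply/matrixP => a b; rewrite !mxE conjC_nat andbC. Qed.

Lemma entry_form p (M : 'M[algC]_p) a b :
  ((delta_mx 0 a : 'rV[algC]_p) *m M *m adj (delta_mx 0 b : 'rV[algC]_p)) 0 0 = M a b.
Proof.
rewrite adj_delta -rowE -colE.
by rewrite [LHS]mxE [LHS]mxE.
Qed.

Lemma form_ext p (M N : 'M[algC]_p) :
  (forall u v : 'rV_p, (u *m M *m adj v) 0 0 = (u *m N *m adj v) 0 0) -> M = N.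
Proof. by move=> e; apply/matrixP => a b; rewrite -(entry_form M) -(entry_form N) e. Qed.

Lemma adj_nz m p (A : 'M[algC]_(m, p)) : A != 0 -> A *m adj A != 0.
Proof.
move=> nzA; apply: contra nzA => /eqP e; apply/eqP/matrixP => a b.
have : (A *m adj A) a a = 0 by rewrite e mxE.
rewrite mxE => /psumr_eq0P h.
have /(_ b isT) : forall i, true -> A a i * adj A i a = 0.
  by apply: h => k _; rewrite !mxE mul_conjC_ge0.
by rewrite !mxE => /eqP; rewrite mul_conjC_eq0 => /eqP ->.
Qed.

Section Adj.
Variables (gT : finGroupType) (G H : {group gT}).
Local Notation n := (nX G H).
Local Notation rX := (rX G H).

Lemma adj_rX g : g \in G -> adj (rX g) = rX (g^-1)%g.
Proof.
move=> Gg; apply/matrixP => i j; rewrite !mxE conjC_nat.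
suff -> : (cosX j == (g *: cosX i)%g) = (cosX i == (g^-1 *: cosX j)%g) by [].
by apply/eqP/eqP => [->|->]; rewrite ?lcosetK ?lcosetKV.
Qed.

Lemma comm_adj (f : 'M[algC]_n) : comm f -> comm (adj f).
Proof.
move=> cf g Gg; rewrite -[rX g]adjK adj_rX // -!adjM.
by rewrite cf ?groupV.
Qed.

End Adj.

Lemma adj0 m p : adj (0 : 'M[algC]_(m, p)) = 0.
Proof. by apply/matrixP => a b; rewrite !mxE conjC0. Qed.

Lemma adjZ m p c (A : 'M[algC]_(m, p)) : adj (c *: A) = c^* *: adj A.
Proof. by apply/matrixP => a b; rewrite !mxE rmorphM. Qed.

Lemma RL_one m r (L : 'M[algC]_(m, r)) (R : 'M[algC]_(r, m)) B1 B2 :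
  B1 *m L = 1%:M -> R *m B2 = 1%:M -> L *m R *m (L *m R) = L *m R -> R *m L = 1%:M.
Proof.
move=> e1 e2 h; have := congr1 (fun M => B1 *m M *m B2) h.
by rewrite /= !mulmxA e1 mul1mx -!mulmxA e2 !mulmx1.
Qed.

Lemma tr_idem m (A : 'M[algC]_m) : A *m A = A -> \tr A = (\rank A)%:R.
Proof.
move=> AA.
have eA := mulmx_base A.
have [B1 e1] := row_fullP (col_base_full A).
have [B2 e2] := row_freeP (row_base_free A).
have RL : row_base A *m col_base A = 1%:M.
  by apply: (RL_one e1 e2); rewrite eA.
by rewrite -{1}eA mxtrace_mulC RL mxtrace1.
Qed.

Section Orb.
Variables (gT : finGroupType) (G H : {group gT}).
Hypothesis sHG : H \subset G.
Local Notation Xc := (Xc G H).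

Definition orb (p : {set gT} * {set gT}) : {set {set gT} * {set gT}} :=
  [set ((g *: p.1)%g, (g *: p.2)%g) | g in G].

Lemma orb_refl p : p \in orb p.
Proof. by apply/imsetP; exists 1%g; rewrite ?group1 ?lcoset1 //; case: p. Qed.

Lemma orb_mem q p : q \in orb p -> orb q = orb p.
Proof.
case/imsetP=> g Gg ->; apply/setP => r; apply/imsetP/imsetP => [[k Gk ->]|[k Gk ->]].
  by exists (k * g)%g; rewrite ?groupM //= !lcosetM.
exists (k * g^-1)%g; rewrite ?groupM ?groupV //= -!lcosetM !mulgKV //.
Qed.

Lemma repr_in x : x \in Xc -> repr x \in x.
Proof. by case/lcosetsP=> a _ ->; apply: mem_repr (lcoset_refl H a). Qed.

Lemma reprG x : x \in Xc -> repr x \in G.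
Proof.
move=> xX; have := repr_in xX; case/lcosetsP: xX => a Ga ex.
by rewrite ex => /lcosetP[h Hh ->]; rewrite groupM // (subsetP sHG).
Qed.

Lemma repr_coset x : x \in Xc -> (repr x *: H)%g = x.
Proof.
move=> xX; have := repr_in xX; case/lcosetsP: xX => a Ga ->.
by move/lcoset_eqP.
Qed.

Lemma orbitsE : orbitsXX G H = [set orb p | p in setX Xc Xc].
Proof. by []. Qed.

Lemma orb_diag x : x \in Xc -> orb (x, x) = diagXX G H.
Proof.
move=> xX; apply/setP => r; apply/imsetP/imsetP => [[g Gg ->]|[z zX ->]].
  by exists (g *: x)%g; rewrite ?actXc.
case/lcosetsP: xX => a Ga ex; case/lcosetsP: zX => b Gb ez.
exists (b * a^-1)%g; rewrite ?groupM ?groupV //= ex ez -lcosetM mulgKV //.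
Qed.

Lemma sumO1 x y : x \in Xc -> y \in Xc ->
  \sum_(O in orbitsXX G H) ((x, y) \in O)%:R = 1 :> algC.
Proof.
move=> xX yX.
have Oin : orb (x, y) \in orbitsXX G H.
  by rewrite orbitsE; apply/imsetP; exists (x, y); rewrite ?inE ?xX ?yX.
rewrite (bigD1 _ Oin) /= orb_refl big1 ?addr0 // => O /andP[].
rewrite orbitsE => /imsetP[p _ ->] ne.
apply/eqP; rewrite pnatr_eq0 eqb0; apply: contra ne => /orb_mem ->.
by [].
Qed.

End Orb.

Section Main.
Variables (gT : finGroupType) (G H : {group gT}).
Hypothesis sHG : H \subset G.
Local Notation n := (nX G H).
Local Notation rX := (rX G H).
Variables (I : finType) (T : I -> 'M[algC]_n) (j1 : I)
  (Q : I -> 'M[algC]_n) (theta : I -> 'rV[algC]_n).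
Hypothesis simT : forall j, mxsimple rX (T j).
Hypothesis nisoT : forall i j, i != j -> ~ mx_iso rX (T i) (T j).
Hypothesis dirT : mxdirect (\sum_j T j).
Hypothesis fullT : (\sum_j T j == 1%:M)%MS.
Hypothesis constT : (T j1 == (const_mx 1 : 'rV[algC]_n))%MS.
Hypothesis innQ : forall j, inv_inner_on G H (T j) (Q j).
Hypothesis thetaT : forall j, (theta j <= T j)%MS.
Hypothesis thetaH : forall j h, h \in H -> theta j *m rX h = theta j.
Hypothesis theta1 : forall j, formQ G H (Q j) (theta j) (theta j) = 1.

Local Notation P := (Pj T).
Local Notation e := (delta_mx 0 (i0 G H) : 'rV[algC]_n).

Lemma TP i j : T i *m P j = if i == j then T i else 0.
Proof. exact: (PjT dirT j (submx_refl (T i))). Qed.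

Lemma cP j : comm (P j).
Proof. exact: comm_Pj. Qed.

Lemma nzT i : T i != 0.
Proof. by case: (simT i). Qed.

Lemma adjP j : adj (P j) = P j.
Proof.
apply: (extT fullT) => i.
have [mu Hmu] := comm_scalar simT nisoT dirT fullT (comm_adj (cP j)) i.
rewrite Hmu TP.
have nz := adj_nz (nzT i).
have : T i *m adj (P j) *m adj (T i) = if i == j then T i *m adj (T i) else 0.
  by rewrite -mulmxA -adjM TP; case: eqP => _ //; rewrite adj0 mulmx0.
rewrite Hmu -scalemxAl; case: eqP => _ h.
  have : (mu - 1) *: (T i *m adj (T i)) == 0 by rewrite scalerBl h scale1r subrr.
  by rewrite scalemx_eq0 (negbTE nz) orbF subr_eq0 => /eqP ->; rewrite scale1r.
by move: h => /eqP; rewrite scalemx_eq0 (negbTE nz) orbF => /eqP ->; rewrite scale0r.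
Qed.

Lemma Qprop j : exists lam, forall u v : 'rV_n, (u <= T j)%MS -> (v <= T j)%MS ->
  formQ G H (Q j) u v = lam * (u *m adj v) 0 0.
Proof.
pose B := P j *m Q j *m adj (P j).
have [_ _ invQ] := innQ j.
have cB : comm B.
  move=> g Gg.
  have key : rX g *m B *m rX (g^-1)%g = B.
    apply: form_ext => u v.
    transitivity (formQ G H (Q j) (u *m P j *m rX g) (v *m P j *m rX g)).
      rewrite /formQ -[(map_mx _ (v *m P j *m rX g))^T]/(adj _).
      rewrite !adjM adj_rX // adjP /B adjP.
      have c1 : P j *m rX g = rX g *m P j := cP j Gg.
      have c2 : P j *m rX (g^-1)%g = rX (g^-1)%g *m P j := cP j (groupVr Gg).
      have eL : rX g *m (P j *m Q j *m P j) *m rX (g^-1)%g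
          = rX g *m P j *m Q j *m (rX (g^-1)%g *m P j) by rewrite -c2 !mulmxA.
      have eR : u *m P j *m rX g = u *m (rX g *m P j) by rewrite -c1 mulmxA.
      by rewrite eL eR !mulmxA.
    rewrite invQ ?Pj_sub // /formQ -[(map_mx _ (v *m P j))^T]/(adj _).
    by rewrite adjM /B !mulmxA.
  by rewrite -{1}key mulmxA repr_mxKV.
have [lam Hl] := comm_scalar simT nisoT dirT fullT cB j.
exists lam => u v uT vT.
have uP : u *m P j = u by rewrite (PjT dirT j uT) eqxx.
have vP : v *m P j = v by rewrite (PjT dirT j vT) eqxx.
rewrite /formQ -[(map_mx _ v)^T]/(adj _) -{1}uP -{1}vP adjM.
have -> : u *m P j *m Q j *m (adj (P j) *m adj v) = u *m B *m adj v by rewrite /B !mulmxA.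
case/submxP: uT => D ->.
by rewrite -(mulmxA D) Hl -scalemxAr -scalemxAl mxE.
Qed.


Lemma rX11 g : g \in G -> ((e *m adj (e *m rX g)) 0 0) = (g \in H)%:R.
Proof.
move=> Gg; rewrite adjM adj_rX // mulmxA entry_form rXE ixK ?HXc //.
suff -> : ((H : {set gT}) == ((g^-1)%g *: H)%g) = (g \in H) by [].
apply/eqP/idP => [eH|gH]; last by rewrite lcoset_id // groupV.
have : (1 \in (g^-1)%g *: H)%g by rewrite -eH group1.
by rewrite mem_lcoset invgK mulg1.
Qed.

Lemma fixH j w : (w <= T j)%MS -> (forall h, h \in H -> w *m rX h = w) ->
  exists c, w = c *: (e *m P j).
Proof.
move=> wT wH.
pose K := \sum_(g in G) adj (e *m rX g) *m (w *m rX g).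
have cK : comm K.
  move=> k Gk; rewrite /K mulmx_suml mulmx_sumr.
  rewrite [RHS](reindex (fun g => g * k)%g); last first.
    by exists (fun g => g * k^-1)%g => g _; rewrite ?mulgK ?mulgKV.
  rewrite [RHS](eq_bigl (fun g => g \in G)) => [|g]; last by rewrite groupMr.
  apply: eq_bigr => g Gg.
  have kk : rX k *m rX (k^-1)%g = 1%:M by rewrite -repr_mxM ?groupV // mulgV repr_mx1.
  have -> : rX (g * k)%g = rX g *m rX k by rewrite repr_mxM.
  rewrite !mulmxA (adjM (e *m rX g) (rX k)) (@adj_rX _ G H k Gk) !mulmxA kk mul1mx.
  done.
have eK : e *m K = #|H|%:R *: w.
  rewrite /K mulmx_sumr.
  rewrite (eq_bigr (fun g => (g \in H)%:R *: w)) => [|g Gg]; last first.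
    rewrite mulmxA [e *m adj _]mx11_scalar mul_scalar_mx rX11 //.
    case gH: (g \in H); first by rewrite (wH g gH) /= scale1r.
    by rewrite /= !scale0r.
  rewrite -scaler_suml; congr (_ *: _).
  transitivity (\sum_(g in H) (1 : algC)); last by rewrite sumr_const.
  rewrite big_mkcond [RHS]big_mkcond; apply: eq_bigr => g _.
  case gH: (g \in H); first by rewrite (subsetP sHG g gH).
  by case: (g \in G).
have [mu Hmu] := comm_decomp simT nisoT dirT fullT cK.
have h1 : e *m K *m P j = mu j *: (e *m P j).
  rewrite Hmu mulmx_sumr mulmx_suml (bigD1 j) //= big1 ?addr0.
    by rewrite -scalemxAr -scalemxAl -mulmxA PjPj // eqxx.
  move=> i ij; rewrite -scalemxAr -scalemxAl -mulmxA PjPj //.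
  by rewrite (negbTE ij) mulmx0 scaler0.
have wP : w *m P j = w by rewrite (PjT dirT j wT) eqxx.
rewrite eK -scalemxAl wP in h1.
have nzH : (#|H|%:R : algC) != 0 by rewrite pnatr_eq0 -lt0n cardG_gt0.
exists (mu j / #|H|%:R).
by rewrite mulrC -scalerA -h1 scalerA mulVf // scale1r.
Qed.


Lemma P_act j g k l : g \in G -> P j (actX g k) (actX g l) = P j k l.
Proof.
move=> Gg.
by rewrite -(mulmx_rX (P j) (actX g k) l Gg) (cP j Gg) (rX_mulmx (P j) _ _ Gg) actXK.
Qed.

Lemma n_gt0 : (0 < n)%N.
Proof. exact: (leq_ltn_trans (leq0n _) (ltn_ord (i0 G H))). Qed.

Lemma P00 j : P j (i0 G H) (i0 G H) = (\rank (T j))%:R / n%:R.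
Proof.
have etr : \tr (P j) = (\rank (T j))%:R.
  rewrite tr_idem; last by rewrite PjPj // eqxx.
  congr _%:R; apply/eqP; rewrite eqn_leq !mxrankS //.
    by have := TP j j; rewrite eqxx => <-; apply: submxMl.
  by rewrite -[P j]mul1mx Pj_sub.
have tr2 : \tr (P j) = n%:R * P j (i0 G H) (i0 G H).
  rewrite /mxtrace (eq_bigr (fun _ => P j (i0 G H) (i0 G H))).
    by rewrite sumr_const card_ord mulr_natl.
  by move=> k _; have [a Ga <-] := actX_trans k; rewrite P_act.
have n0 : (n%:R : algC) != 0 by rewrite pnatr_eq0 -lt0n n_gt0.
by rewrite -etr tr2 mulrC mulKf.
Qed.

Lemma psiE j g : g \in G ->
  spherical G H (T j) (Q j) (theta j) g = P j (actX g (i0 G H)) (i0 G H).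
Proof.
move=> Gg.
have [c ec] := fixH (thetaT j) (thetaH j).
have [lam Hl] := Qprop j.
have form h : h \in G -> formQ G H (Q j) (theta j *m rX (h^-1)%g) (theta j)
    = lam * (c * c^*) * P j (actX h (i0 G H)) (i0 G H).
  move=> Gh; rewrite Hl ?thetaT //; last first.
    apply: submx_trans (mxmoduleP (mxsimple_module (simT j)) _ (groupVr Gh)).
    exact: submxMr.
  rewrite ec adjZ adjM adjP -!scalemxAl -scalemxAr mxE.
  have -> : e *m P j *m rX (h^-1)%g *m (P j *m adj e) = e *m (rX (h^-1)%g *m P j) *m adj e.
    rewrite -(cP j (groupVr Gh)) !mulmxA.
    rewrite -[e *m P j *m rX _ *m P j]mulmxA -(cP j (groupVr Gh)) mulmxA.
    by rewrite -(mulmxA e (P j) (P j)) PjPj // eqxx.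
  have sc (a : algC) (M : 'M[algC]_1) : (a *: M) 0 0 = a * M 0 0 by rewrite mxE.
  rewrite sc entry_form rX_mulmx ?groupV // invgK.
  by rewrite !mulrA.
have one := theta1 j.
rewrite -[X in formQ _ _ _ X _]mulmx1 -(repr_mx1 rX) -invg1 form // in one.
rewrite act1X P00 in one.
rewrite /spherical form // mulrA (mulrC ((\rank (T j))%:R / n%:R)).
by rewrite one mul1r.
Qed.


Local Notation Xc := (Xc G H).

Lemma PsiE j x y : x \in Xc -> y \in Xc ->
  Psi G H (T j) (Q j) (theta j) x y = P j (ix G H y) (ix G H x).
Proof.
move=> xX yX; rewrite /Psi.
have Ga := reprG sHG xX; have Gb := reprG sHG yX.
have ia z : z \in Xc -> actX (repr z) (i0 G H) = ix G H z.
  move=> zX; apply: cosX_inj; rewrite cosX_act ?(reprG sHG) // ixK ?HXc //.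
  by rewrite /i0 ixK ?HXc // (repr_coset zX).
rewrite psiE ?groupM ?groupV // -(P_act j _ _ Ga) actX_comp ?groupM ?groupV //.
by rewrite mulKVg !ia.
Qed.

Lemma sumPsi x y : x \in Xc -> y \in Xc ->
  \sum_j Psi G H (T j) (Q j) (theta j) x y = (x == y)%:R.
Proof.
move=> xX yX.
rewrite (eq_bigr (fun j => P j (ix G H y) (ix G H x))) => [|j _]; last exact: PsiE.
rewrite -summxE sumPj // mxE.
suff -> : (ix G H y == ix G H x) = (x == y) by [].
apply/eqP/eqP => [e|->] //.
by rewrite -(ixK xX) -(ixK yX) e.
Qed.

Lemma sum_all j : \sum_(x in Xc) \sum_(y in Xc) P j (ix G H y) (ix G H x)
   = (j == j1)%:R * n%:R.
Proof.
have cT : ((const_mx 1 : 'rV[algC]_n) <= T j1)%MS by rewrite (eqmxP constT).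
have cPj := PjT dirT j cT.
transitivity (\sum_(k < n) \sum_(l < n) P j l k).
  symmetry; rewrite (big_enum_rank (HXc G H)); apply: eq_bigr => x xX.
  by rewrite (big_enum_rank (HXc G H)).
have ek (k : 'I_n) : \sum_(l < n) P j l k = ((const_mx 1 : 'rV[algC]_n) *m P j) 0 k.
  by rewrite mxE; apply: eq_bigr => l _; rewrite mxE mul1r.
under eq_bigr => k _ do rewrite ek.
rewrite cPj.
case: eqP => [<-|ne].
  rewrite eqxx mul1r (eq_bigr (fun _ => 1)) => [|k _]; last by rewrite mxE.
  by rewrite sumr_const card_ord.
have -> : (j == j1) = false by apply/eqP => ej; apply: ne.
by rewrite mul0r big1 // => k _; rewrite mxE.
Qed.

Theorem main_sec :
  (forall j, \sum_(O in orbitsXX G H) Cmat G H O (Psi G H (T j) (Q j) (theta j))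
               = (j == j1)%:R * (nX G H)%:R)
  /\
  (forall O, O \in orbitsXX G H ->
     \sum_j Cmat G H O (Psi G H (T j) (Q j) (theta j))
       = (O == diagXX G H)%:R * (nX G H)%:R).
Proof.
split.
  move=> j.
  transitivity (\sum_(x in Xc) \sum_(y in Xc) (Psi G H (T j) (Q j) (theta j) x y)^*).
    rewrite /Cmat exchange_big; apply: eq_bigr => x xX.
    rewrite exchange_big; apply: eq_bigr => y yX.
    by rewrite -mulr_suml sumO1 // mul1r.
  transitivity ((\sum_(x in Xc) \sum_(y in Xc) P j (ix G H y) (ix G H x))^*).
    rewrite rmorph_sum; apply: eq_bigr => x xX.
    by rewrite rmorph_sum; apply: eq_bigr => y yX; rewrite PsiE.
  by rewrite sum_all rmorphM /= !conjC_nat.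
move=> O OX.
transitivity (\sum_(x in Xc) ((x, x) \in O)%:R : algC).
  rewrite /Cmat exchange_big; apply: eq_bigr => x xX.
  rewrite exchange_big (bigD1 x) //= [X in _ + X]big1 ?addr0.
    by rewrite -mulr_sumr -rmorph_sum sumPsi // eqxx rmorph_nat mulr1.
  move=> y /andP[yX yx].
  by rewrite -mulr_sumr -rmorph_sum sumPsi // eq_sym (negbTE yx) rmorph_nat mulr0.
have [->|ne] := eqVneq O (diagXX G H).
  rewrite (eq_bigr (fun _ => 1)) => [|x xX]; last first.
    by suff -> : (x, x) \in diagXX G H by []; apply/imsetP; exists x.
  by rewrite sumr_const mul1r.
rewrite big1 ?mul0r // => x xX.
apply/eqP; rewrite pnatr_eq0 eqb0; apply: contra ne => xO.
move: OX; rewrite orbitsE => /imsetP[p _ eO].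
by rewrite -(orb_diag xX) eO (orb_mem (p := p)) // -eO.
Qed.

End Main.


Theorem mainTheorem8 (gT : finGroupType) (G H : {group gT}) (sHG : H \subset G)
  (I : finType) (T : I -> 'M[algC]_(nX G H)) (j1 : I)
  (Q : I -> 'M[algC]_(nX G H)) (theta : I -> 'rV[algC]_(nX G H))
  (* C[X] = (+)_j T_j, with T_j pairwise non-isomorphic irreducible G-subreps *)
  (simT : forall j, mxsimple (rX G H) (T j))
  (nisoT : forall i j, i != j -> ~ mx_iso (rX G H) (T i) (T j))
  (dirT : mxdirect (\sum_j T j))
  (fullT : (\sum_j T j == 1%:M)%MS)
  (* T_1 = constants *)
  (constT : (T j1 == (const_mx 1 : 'rV[algC]_(nX G H)))%MS)
  (* G-invariant Hermitian inner products on each T_j *)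
  (innQ : forall j, inv_inner_on G H (T j) (Q j))
  (* H-invariant unit vectors theta_j in T_j *)
  (thetaT : forall j, (theta j <= T j)%MS)
  (thetaH : forall j h, h \in H -> theta j *m rX G H h = theta j)
  (theta1 : forall j, formQ G H (Q j) (theta j) (theta j) = 1) :
  (forall j, \sum_(O in orbitsXX G H) Cmat G H O (Psi G H (T j) (Q j) (theta j))
               = (j == j1)%:R * (nX G H)%:R)
  /\
  (forall O, O \in orbitsXX G H ->
     \sum_j Cmat G H O (Psi G H (T j) (Q j) (theta j))
       = (O == diagXX G H)%:R * (nX G H)%:R).
Proof.
by apply: main_sec.
Qed.
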